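(* There is an absolute constant $C$ such that the following holds. Let $K$ be any field, $n\ge 3$, $V$ an $n$-dimensional $K$-vector space, and let $X$ be a symmetric generating set of $SL(V)$ with $1\in X$ which contains a whole transvection group $t^K$. Let $$Y_1=\{x_{n^2}\cdots x_1\, t^\lambda\, x_1^{-1}\cdots x_{n^2}^{-1}\,:\,\lambda\in K,\ x_1,\ldots,x_{n^2}\in X\}.$$ Then there is a $K$-closed set of transvections $Y_2\supseteq Y_1$ with $\ell_{Y_1}(Y_2)\le Cn$ such that $\Gamma(Y_2)$ contains a one-way directed edge.
   Context: A transvection is an element $1+d\otimes\phi\in SL(V)$ acting by $x\mapsto x+\phi(x)d$, with $0\ne d\in V$, $0\ne\phi\in V^*$, $\phi(d)=0$; $s^\lambda=1+\lambda d\otimes\phi$ for $s=1+d\otimes\phi$, and $s^K=\{s^\lambda:\lambda\in K\}$. A set $Y$ of transvections (the identity $1$ being allowed as the trivial transvection) is $K$-closed if $s^K\subseteq Y$ for every $s\in Y$. For sets $A,B\subseteq SL(V)$, $A^k$ is the set of products of $k$ elements of $A$ and $\ell_A(B)=\min\{k: B\subseteq A^k\}$. For a set $Y$ of transvections, $\Gamma(Y)$ is the directed graph with vertex set $Y\setminus\{1\}$ with a directed edge from $1+d_1\otimes\phi_1$ to $1+d_2\otimes\phi_2$ iff $\phi_2(d_1)\neq 0$; an edge $(r,s)$ is one-way directed if $(s,r)$ is not an edge. *)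

(* Defs.v *)
(* V = K^n realised as column vectors 'cV[K]_n; SL(V) as n x n
   matrices of determinant 1 acting on column vectors by left multiplication. *)
From mathcomp Require Import all_boot all_order all_algebra.
Set Implicit Arguments. Unset Strict Implicit. Unset Printing Implicit Defensive.
Import GRing.Theory.
Local Open Scope ring_scope.

Section Transvections.
Variables (K : fieldType) (n : nat).
Notation M := ('M[K]_n).

Definition inSL (g : M) : Prop := \det g = 1.

Definition is_transvection (s : M) : Prop :=
  exists (d : 'cV[K]_n) (phi : 'rV[K]_n),
    [/\ d != 0, phi != 0, phi *m d = 0 & s = 1%:M + d *m phi].

Definition is_transvection0 (s : M) : Prop := is_transvection s \/ s = 1%:M.

(* s^lambda = 1 + lambda d (x) phi,  i.e. 1 + lambda (s - 1) *)
Definition tpow (s : M) (lambda : K) : M := 1%:M + lambda *: (s - 1%:M).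

Definition transvection_set (Y : M -> Prop) : Prop :=
  forall s, Y s -> is_transvection0 s.

Definition K_closed (Y : M -> Prop) : Prop :=
  forall s, Y s -> forall lambda : K, Y (tpow s lambda).

Definition prodl (s : seq M) : M := foldr (@mulmx K n n n) 1%:M s.

Definition set_pow (A : M -> Prop) (k : nat) : M -> Prop :=
  fun g => exists s : seq M, [/\ size s = k, (forall a, a \in s -> A a) & g = prodl s].

(* ell_A(B) <= m, where ell_A(B) = min {k : B \subseteq A^k} *)
Definition ell_le (A B : M -> Prop) (m : nat) : Prop :=
  exists k, (k <= m)%N /\ (forall g, B g -> set_pow A k g).

Definition in_gen (X : M -> Prop) (g : M) : Prop :=
  forall H : M -> Prop,
    H 1%:M -> (forall a b, H a -> H b -> H (a *m b)) ->
    (forall a, H a -> H (invmx a)) -> (forall x, X x -> H x) -> H g.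

Definition generates_SL (X : M -> Prop) : Prop :=
  (forall x, X x -> inSL x) /\ (forall g, inSL g -> in_gen X g).

Definition symmetric_set (X : M -> Prop) : Prop := forall x, X x -> X (invmx x).

Definition gamma_edge (r s : M) : Prop :=
  exists (d1 : 'cV[K]_n) (phi1 : 'rV[K]_n) (d2 : 'cV[K]_n) (phi2 : 'rV[K]_n),
    [/\ d1 != 0, phi1 != 0, phi1 *m d1 = 0 & r = 1%:M + d1 *m phi1] /\
    [/\ d2 != 0, phi2 != 0, phi2 *m d2 = 0 & s = 1%:M + d2 *m phi2] /\
    phi2 *m d1 != 0.

Definition has_oneway_edge (Y : M -> Prop) : Prop :=
  exists r s, [/\ Y r, Y s, r <> 1%:M & s <> 1%:M] /\ (gamma_edge r s /\ ~ gamma_edge s r).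

(* Y1 = { x_{n^2} ... x_1 t^lambda x_1^-1 ... x_{n^2}^-1 } ;
   the list xs = [:: x_{n^2}; ...; x_1] *)
Definition Y1_set (X : M -> Prop) (t : M) : M -> Prop :=
  fun g => exists (lambda : K) (xs : seq M),
    [/\ size xs = (n ^ 2)%N, (forall x, x \in xs -> X x) &
        g = prodl xs *m tpow t lambda *m prodl (rev (map (@invmx K n) xs))].

End Transvections.

(* Main.v *)
Require Import Defs.
From mathcomp Require Import all_boot all_order all_algebra.
From mathcomp Require Import ring zify.
From Stdlib Require Import Classical.
Set Implicit Arguments. Unset Strict Implicit. Unset Printing Implicit Defensive.
Import GRing.Theory.
Local Open Scope ring_scope.

Section Basics.
Variables (K : fieldType) (n : nat).
Notation M := ('M[K]_n).

Lemma invmx_uniq (A B : M) : A \in unitmx -> A *m B = 1%:M -> invmx A = B.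
Proof. by move=> uA AB; rewrite -[B](mulKmx uA) AB mulmx1. Qed.

Lemma invmxM (A B : M) : A \in unitmx -> B \in unitmx ->
  invmx (A *m B) = invmx B *m invmx A.
Proof.
move=> uA uB; apply: invmx_uniq; first by rewrite unitmx_mul uA.
by rewrite -!mulmxA (mulmxA B) mulmxV // mul1mx mulmxV.
Qed.

Lemma prodl_rcons (s : seq M) x : prodl (rcons s x) = prodl s *m x.
Proof.
elim: s => [|y s IH] /=; first by rewrite /prodl /= mulmx1 mul1mx.
by rewrite /prodl /= -/(prodl _) IH mulmxA.
Qed.

Lemma prodl_cat (s1 s2 : seq M) : prodl (s1 ++ s2) = prodl s1 *m prodl s2.
Proof.
elim: s1 => [|y s IH] /=; first by rewrite /prodl /= mul1mx.
by rewrite /prodl /= -!/(prodl _) IH mulmxA.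
Qed.

Lemma prodl_nseq1 m : prodl (nseq m (1%:M : M)) = 1%:M.
Proof. by elim: m => [|m IH] //=; rewrite /prodl /= -/(prodl _) IH mulmx1. Qed.

Lemma prodl_unit (s : seq M) : (forall a, a \in s -> a \in unitmx) -> prodl s \in unitmx.
Proof.
elim: s => [|y s IH] H /=; first exact: unitmx1.
rewrite /prodl /= -/(prodl _) unitmx_mul H ?mem_head //= IH // => a as'.
by apply: H; rewrite inE as' orbT.
Qed.

Lemma inv_prodl (s : seq M) : (forall a, a \in s -> a \in unitmx) ->
  invmx (prodl s) = prodl (rev (map (@invmx K n) s)).
Proof.
elim: s => [|y s IH] H /=; first exact: invmx1.
have Hs : forall a, a \in s -> a \in unitmx by move=> a as'; apply: H; rewrite inE as' orbT.
rewrite /prodl /= -/(prodl _) invmxM; last exact: prodl_unit.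
  by rewrite IH // rev_cons; exact: (esym (prodl_rcons _ _)).
by apply: H; rewrite mem_head.
Qed.

End Basics.

Lemma max_exists (P : nat -> Prop) m :
  (exists x, P x) -> (forall x, P x -> (x <= m)%N) ->
  exists x, P x /\ forall y, P y -> (y <= x)%N.
Proof.
elim: m => [|m IH] [x Px] Hb.
  exists x; split => // y Py; have := Hb y Py; have := Hb x Px; lia.
case: (classic (P m.+1)) => Pm.
  by exists m.+1; split => // y /Hb.
apply: IH; first by exists x.
move=> y Py; have := Hb y Py; rewrite leq_eqVlt; case/orP => [/eqP E|]; last by [].
by subst y.
Qed.

Section Words.
Variables (K : fieldType) (n : nat) (X : 'M[K]_n -> Prop).
Hypothesis HX : generates_SL X.
Hypothesis Hsym : symmetric_set X.
Hypothesis H1 : X 1%:M.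

Definition Bw k (g : 'M[K]_n) :=
  exists xs : seq 'M[K]_n, [/\ size xs = k, (forall x, x \in xs -> X x) & g = prodl xs].

Lemma X_unit x : X x -> x \in unitmx.
Proof. by move=> /(proj1 HX) Hx; rewrite unitmxE Hx unitr1. Qed.

Lemma Bw_unit k g : Bw k g -> g \in unitmx.
Proof. by case=> xs [_ Hxs ->]; apply: prodl_unit => a /Hxs /X_unit. Qed.

Lemma Bw1 k : Bw k 1%:M.
Proof.
exists (nseq k 1%:M); split; first by rewrite size_nseq.
  by move=> x; rewrite mem_nseq => /andP [_ /eqP ->].
by rewrite prodl_nseq1.
Qed.

Lemma Bw_pad k m g : (k <= m)%N -> Bw k g -> Bw m g.
Proof.
move=> km [xs [sz Hxs ->]]; exists (nseq (m - k) 1%:M ++ xs); split.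
- by rewrite size_cat size_nseq sz subnK.
- move=> x; rewrite mem_cat mem_nseq => /orP [/andP [_ /eqP ->]|] //; exact: Hxs.
- by rewrite prodl_cat prodl_nseq1 mul1mx.
Qed.

Lemma Bw_cons k x g : X x -> Bw k g -> Bw k.+1 (x *m g).
Proof.
move=> Xx [xs [sz Hxs ->]]; exists (x :: xs); split => //=; first by rewrite sz.
by move=> y; rewrite inE => /orP [/eqP ->|/Hxs].
Qed.

Lemma Bw_inv k g : Bw k g -> Bw k (invmx g).
Proof.
move=> [xs [sz Hxs ->]]; exists (rev (map (@invmx K n) xs)); split.
- by rewrite size_rev size_map.
- move=> y; rewrite mem_rev => /mapP [x xin ->]; apply: Hsym; exact: Hxs.
- by rewrite inv_prodl // => a /Hxs /X_unit.
Qed.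

Variable Mx : 'M[K]_n.
Hypothesis Mx0 : Mx != 0.
Variable L : 'M[K]_n -> K.
Hypothesis LD : forall A B, L (A + B) = L A + L B.
Hypothesis LZ : forall c A, L (c *: A) = c * L A.

Local Notation N := (n * n)%N.
Definition Sp (l : seq 'rV[K]_N) : 'M[K]_N := foldr (fun s A => (s + A)%MS) 0 l.

Lemma Sp_mem l v : v \in l -> (v <= Sp l)%MS.
Proof.
elim: l => [|s l IH] //=; rewrite inE => /orP [/eqP ->|/IH H]; first exact: addsmxSl.
exact: submx_trans H (addsmxSr _ _).
Qed.

Lemma Sp_sub l m (A : 'M[K]_(m, N)) : (forall v, v \in l -> (v <= A)%MS) -> (Sp l <= A)%MS.
Proof.
elim: l => [|s l IH] H /=; first exact: sub0mx.
rewrite addsmx_sub H ?mem_head //= IH // => v vl; apply: H; by rewrite inE vl orbT.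
Qed.

Lemma Sp_ind (Q : 'rV[K]_N -> Prop) l :
  Q 0 -> (forall a b, Q a -> Q b -> Q (a + b)) -> (forall c a, Q a -> Q (c *: a)) ->
  (forall s, s \in l -> Q s) -> forall v, (v <= Sp l)%MS -> Q v.
Proof.
move=> Q0 QD QZ; elim: l => [|s l IH] Hl v /=.
  by rewrite submx0 => /eqP ->.
move=> /sub_addsmxP [[u1 u2] /= ->]; apply: QD.
  rewrite [u1]mx11_scalar mul_scalar_mx; apply: QZ; apply: Hl; exact: mem_head.
apply: IH; last exact: submxMl.
by move=> s' s'l; apply: Hl; rewrite inE s'l orbT.
Qed.

Definition cnj (g A : 'M[K]_n) := g *m A *m invmx g.

Definition Sk k (v : 'rV[K]_N) := exists b, Bw k b /\ v = mxvec (cnj b Mx).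

Definition Good k l := (forall v, v \in l -> Sk k v) /\
  forall l', (forall v, v \in l' -> Sk k v) -> (\rank (Sp l') <= \rank (Sp l))%N.

Lemma good_exists k : exists l, Good k l.
Proof.
have [] := @max_exists
  (fun r => exists l, (forall v, v \in l -> Sk k v) /\ \rank (Sp l) = r) N.
- by exists 0%N, [::]; split => //=; rewrite mxrank0.
- by move=> x [l [_ <-]]; apply: rank_leq_col.
move=> r [[l [Hl Er]] Hr]; subst r.
exists l; split => // l' Hl'; apply: Hr; by exists l'.
Qed.

Lemma good_all k l v : Good k l -> Sk k v -> (v <= Sp l)%MS.
Proof.
move=> [Hl Hmax] Sv; apply/negPn/negP => nv.
have H : (Sp l < (v + Sp l))%MS.
  rewrite ltmxE addsmxSr /=; apply/negP => H.
  by move: nv; rewrite (submx_trans (addsmxSl v (Sp l)) H).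
have lt := rank_ltmx H.
have le : (\rank (Sp (v :: l)) <= \rank (Sp l))%N.
  by apply: Hmax => w; rewrite inE => /orP [/eqP ->|/Hl].
by move: lt; rewrite ltnNge le.
Qed.

Lemma Sk_mono k v : Sk k v -> Sk k.+1 v.
Proof.
move=> [b [Bb ->]]; exists b; split => //; apply: Bw_pad Bb; exact: leqnSn.
Qed.

Lemma good_mono k l l' : Good k l -> Good k.+1 l' -> (Sp l <= Sp l')%MS.
Proof.
move=> [Hl _] G'; apply: Sp_sub => v /Hl /Sk_mono; exact: good_all.
Qed.

Lemma mxvecMx0 : mxvec Mx != 0.
Proof.
apply: contraNneq Mx0 => H; by rewrite -(mxvecK Mx) H linear0.
Qed.

Lemma Sk_Mx k : Sk k (mxvec Mx).
Proof.
exists 1%:M; split; first exact: Bw1.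
by rewrite /cnj invmx1 mul1mx mulmx1.
Qed.

Lemma chain : exists k, (k < n ^ 2)%N /\
  exists l l', [/\ Good k l, Good k.+1 l' & (Sp l' <= Sp l)%MS].
Proof.
apply: NNPP => Hn.
have claim : forall j, (j <= n ^ 2)%N -> forall l, Good j l -> (j < \rank (Sp l))%N.
  elim => [|j IH] jle l Gl.
    have := mxrankS (good_all Gl (Sk_Mx 0)); by rewrite rank_rV mxvecMx0.
  have [l0 G0] := good_exists j.
  have := IH (ltnW jle) l0 G0 => lt0.
  have sub := good_mono G0 Gl.
  have := mxrank_leqif_sup sub => [[le eq]].
  case E: (Sp l <= Sp l0)%MS.
    exfalso; apply: Hn; exists j; split => //; by exists l0, l; split.
  have : (\rank (Sp l0) < \rank (Sp l))%N by rewrite ltn_neqAle eq E le.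
  move=> lt; exact: leq_ltn_trans lt0 lt.
have [l Gl] := good_exists (n ^ 2).
have := claim _ (leqnn _) l Gl; have := rank_leq_col (Sp l).
rewrite expnS expn1; lia.
Qed.

Lemma cnjM a b A : a \in unitmx -> b \in unitmx -> cnj (a *m b) A = cnj a (cnj b A).
Proof. by move=> ua ub; rewrite /cnj invmxM // !mulmxA. Qed.

Hypothesis HL : forall b, Bw (n ^ 2) b -> L (cnj b Mx) = 0.

Lemma transfer g : inSL g -> L (cnj g Mx) = 0.
Proof.
move=> Sg.
have [k [kn [l [l' [Gl Gl' sub]]]]] := chain.
set A := Sp l.
have SkA v : Sk k v -> (v <= A)%MS by move=> Sv; exact: good_all Gl Sv.
have Sk1A v : Sk k.+1 v -> (v <= A)%MS.
  by move=> Sv; apply: submx_trans sub; exact: good_all Gl' Sv.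
pose Inv (g : 'M[K]_n) := forall v, (v <= A)%MS -> (mxvec (cnj g (vec_mx v)) <= A)%MS.
have cnj0 h : cnj h 0 = 0 by rewrite /cnj mulmx0 mul0mx.
have cnjD h B C : cnj h (B + C) = cnj h B + cnj h C by rewrite /cnj mulmxDr mulmxDl.
have cnjZ h c B : cnj h (c *: B) = c *: cnj h B by rewrite /cnj -scalemxAr -scalemxAl.
have invX x : X x -> Inv x.
  move=> Xx; apply: Sp_ind.
  - by rewrite linear0 cnj0 linear0 sub0mx.
  - by move=> a b Ha Hb; rewrite linearD cnjD linearD addmx_sub.
  - by move=> c a Ha; rewrite linearZ cnjZ linearZ scalemx_sub.
  - move=> s /(proj1 Gl) [b [Bb ->]]; rewrite mxvecK -cnjM ?(X_unit Xx) ?(Bw_unit Bb) //.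
    by apply: Sk1A; exists (x *m b); split => //; exact: Bw_cons.
pose H g := [/\ g \in unitmx, Inv g & Inv (invmx g)].
have Hg : H g.
  apply: (proj2 HX g Sg H).
  - by split; rewrite ?unitmx1 // ?invmx1 => v Hv; rewrite /cnj invmx1 mul1mx mulmx1 vec_mxK.
  - move=> a b [ua Ia Ia'] [ub Ib Ib']; split.
    + by rewrite unitmx_mul ua.
    + by move=> v Hv; rewrite cnjM // -[cnj b _]mxvecK; apply: Ia; apply: Ib.
    + move=> v Hv; rewrite invmxM // cnjM ?unitmx_inv // -[cnj (invmx a) _]mxvecK.
      by apply: Ib'; apply: Ia'.
  - by move=> a [ua Ia Ia']; split; rewrite ?unitmx_inv ?invmxK.
  - by move=> x Xx; split; [exact: X_unit| exact: invX | apply: invX; exact: Hsym].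
have [_ Ig _] := Hg.
have Hv := Ig _ (SkA _ (Sk_Mx k)).
rewrite mxvecK in Hv.
rewrite -[cnj g Mx]mxvecK.
move: Hv; apply: (@Sp_ind (fun v => L (vec_mx v) = 0) l).
- by rewrite linear0 -(scale0r 0) LZ mul0r.
- by move=> a b Ha Hb; rewrite linearD LD Ha Hb addr0.
- by move=> c a Ha; rewrite linearZ LZ Ha mulr0.
- move=> s /(proj1 Gl) [b [Bb ->]]; rewrite mxvecK; apply: HL.
  apply: Bw_pad Bb; exact: ltnW.
Qed.

End Words.

Section Gen.
Variables (K : fieldType) (n : nat).

Definition dot (r : 'rV[K]_n) (c : 'cV[K]_n) : K := (r *m c) 0 0.

Lemma mx11_eq0 (A : 'M[K]_1) : (A == 0) = (A 0 0 == 0).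
Proof.
apply/eqP/eqP => [->|H]; first by rewrite mxE.
by rewrite [A]mx11_scalar H raddf0.
Qed.

Lemma mul11 (A B : 'M[K]_1) : (A *m B) 0 0 = A 0 0 * B 0 0.
Proof. by rewrite mxE big_ord1. Qed.

Lemma dotDl r1 r2 c : dot (r1 + r2) c = dot r1 c + dot r2 c.
Proof. by rewrite /dot mulmxDl mxE. Qed.
Lemma dotDr r c1 c2 : dot r (c1 + c2) = dot r c1 + dot r c2.
Proof. by rewrite /dot mulmxDr mxE. Qed.
Lemma dotZl k r c : dot (k *: r) c = k * dot r c.
Proof. by rewrite /dot -scalemxAl mxE. Qed.
Lemma dotZr k r c : dot r (k *: c) = k * dot r c.
Proof. by rewrite /dot -scalemxAr mxE. Qed.
Lemma dotNl r c : dot (- r) c = - dot r c.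
Proof. by rewrite -scaleN1r dotZl mulN1r. Qed.
Lemma dotNr r c : dot r (- c) = - dot r c.
Proof. by rewrite -scaleN1r dotZr mulN1r. Qed.
Lemma dotA r (A : 'M[K]_n) c : dot (r *m A) c = dot r (A *m c).
Proof. by rewrite /dot mulmxA. Qed.
Lemma dot0r c : dot 0 c = 0.
Proof. by rewrite /dot mul0mx mxE. Qed.
Lemma dot0 r : dot r 0 = 0.
Proof. by rewrite /dot mulmx0 mxE. Qed.

Lemma outer_mul (u : 'cV[K]_n) (r : 'rV[K]_n) (c : 'cV[K]_n) (v : 'rV[K]_n) :
  (u *m r) *m (c *m v) = dot r c *: (u *m v).
Proof.
by rewrite mulmxA -(mulmxA u) [r *m c]mx11_scalar mul_mx_scalar -scalemxAl.
Qed.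

Lemma outer_app (u : 'cV[K]_n) (r : 'rV[K]_n) (c : 'cV[K]_n) :
  (u *m r) *m c = dot r c *: u.
Proof. by rewrite -mulmxA [r *m c]mx11_scalar mul_mx_scalar. Qed.

Lemma outer_appl (c : 'rV[K]_n) (u : 'cV[K]_n) (r : 'rV[K]_n) :
  c *m (u *m r) = dot c u *: r.
Proof. by rewrite mulmxA [c *m u]mx11_scalar mul_scalar_mx. Qed.

Lemma exists_nz_col (u : 'cV[K]_n) : u != 0 -> exists i, u i 0 != 0.
Proof.
move=> u0; apply: NNPP => Hc; move/eqP: u0; apply; apply/matrixP => i j.
rewrite (ord1 j) !mxE; apply/eqP; apply: NNPP => h; apply: Hc; exists i; exact/negP.
Qed.

Lemma exists_nz_row (u : 'rV[K]_n) : u != 0 -> exists i, u 0 i != 0.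
Proof.
move=> u0; apply: NNPP => Hc; move/eqP: u0; apply; apply/matrixP => j i.
rewrite (ord1 j) !mxE; apply/eqP; apply: NNPP => h; apply: Hc; exists i; exact/negP.
Qed.

Lemma outer_neq0 (u : 'cV[K]_n) (v : 'rV[K]_n) : u != 0 -> v != 0 -> u *m v != 0.
Proof.
move=> /exists_nz_col [i ui] /exists_nz_row [j vj].
apply/eqP => /matrixP /(_ i j); rewrite !mxE big_ord1 => /eqP.
by rewrite mulf_eq0 (negbTE ui) (negbTE vj).
Qed.

Lemma dot_delta_r (r : 'rV[K]_n) j : dot r (delta_mx j 0) = r 0 j.
Proof. by rewrite /dot -colE mxE. Qed.
Lemma dot_delta_l (c : 'cV[K]_n) i : dot (delta_mx 0 i) c = c i 0.
Proof. by rewrite /dot -rowE mxE. Qed.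

Lemma unit_Gd (G : 'M[K]_n) (d : 'cV[K]_n) : G \in unitmx -> d != 0 -> G *m d != 0.
Proof.
move=> uG d0; apply: contraNneq d0 => H.
by rewrite -(mulKmx uG d) H mulmx0.
Qed.

Lemma unit_phiG (G : 'M[K]_n) (p : 'rV[K]_n) : G \in unitmx -> p != 0 -> p *m G != 0.
Proof.
move=> uG p0; apply: contraNneq p0 => H.
by rewrite -(mulmxK uG p) H mul0mx.
Qed.

Lemma det_1outer (u : 'cV[K]_n) (v : 'rV[K]_n) :
  \det (1%:M + u *m v) = 1 + dot v u.
Proof.
pose P := block_mx (1%:M : 'M[K]_1) (- v) u 1%:M.
have E1 : P = block_mx 1%:M 0 u 1%:M *m block_mx (1%:M : 'M[K]_1) (- v) 0 (1%:M + u *m v).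
  rewrite mulmx_block !mulmx1 !mul1mx !mulmx0 !mul0mx ?addr0 ?add0r.
  by rewrite mulmxN addrC addrK.
have E2 : P = block_mx (1%:M : 'M[K]_1) (- v) 0 1%:M *m block_mx (1%:M + v *m u) 0 u 1%:M.
  rewrite mulmx_block !mulmx1 !mul1mx !mulmx0 !mul0mx ?addr0 ?add0r.
  by rewrite mulNmx addrK.
have := congr1 determinant E1; rewrite E2 !det_mulmx.
rewrite !det_lblock !det_ublock !det1 !mul1r !mulr1 => <-.
rewrite det_mx11 !mxE /dot mxE; congr (_ + _).
Qed.

End Gen.

Lemma exists_perp (K : fieldType) (n : nat) (r1 r2 : 'rV[K]_n) : (3 <= n)%N ->
  exists w : 'cV[K]_n, [/\ w != 0, dot r1 w = 0 & dot r2 w = 0].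
Proof.
move=> hn; set A := (col_mx r1 r2)^T.
have rk : (0 < \rank (kermx A))%N.
  by rewrite mxrank_ker; have := rank_leq_col A; lia.
have kz : kermx A != 0 by rewrite -mxrank_eq0 -lt0n.
have [i zi] : exists i, row i (kermx A) != 0.
  apply: NNPP => Hc; move/eqP: kz; apply; apply/row_matrixP => i.
  rewrite row0; apply/eqP; apply: NNPP => h; apply: Hc; exists i; exact/negP.
set z := row i (kermx A).
have zA : z *m A = 0 by apply/sub_kermxP; exact: row_sub.
have Aw : col_mx r1 r2 *m z^T = 0.
  by rewrite -[col_mx r1 r2]trmxK -trmx_mul zA trmx0.
move: Aw; rewrite mul_col_mx => /eqP; rewrite col_mx_eq0 => /andP [/eqP e1 /eqP e2].
exists z^T; split.
- apply: contraNneq zi => H; apply/eqP; have := congr1 trmx H; rewrite trmxK trmx0; exact.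
- by rewrite /dot e1 mxE.
- by rewrite /dot e2 mxE.
Qed.

Section Main.
Variables (K : fieldType) (n : nat) (X : 'M[K]_n -> Prop).
Hypothesis HX : generates_SL X.
Hypothesis Hsym : symmetric_set X.
Hypothesis H1 : X 1%:M.
Variables (d : 'cV[K]_n) (phi : 'rV[K]_n).
Hypotheses (d0 : d != 0) (phi0 : phi != 0) (phid : phi *m d = 0).
Let t : 'M[K]_n := 1%:M + d *m phi.
Let D : 'M[K]_n := d *m phi.
Let Y1 := Y1_set X t.
Let Bn := Bw X (n ^ 2).

Lemma dotphid : dot phi d = 0.
Proof. by rewrite /dot phid mxE. Qed.

Lemma DD : D *m D = 0.
Proof. by rewrite /D outer_mul dotphid scale0r. Qed.

Lemma tpowE l : tpow t l = 1%:M + l *: D.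
Proof. by rewrite /tpow /t (addrC 1%:M (d *m phi)) addrK. Qed.

Lemma tpow0 : tpow t 0 = 1%:M.
Proof. by rewrite tpowE scale0r addr0. Qed.

Lemma tpow1 : tpow t 1 = t.
Proof. by rewrite tpowE scale1r. Qed.

Lemma tpowV l : tpow t l *m tpow t (- l) = 1%:M.
Proof.
rewrite !tpowE mulmxDl !mulmxDr !mul1mx mulmx1 -!scalemxAl -!scalemxAr DD.
by rewrite !scaler0 addr0 scaleNr addrNK.
Qed.

Lemma tpow_unit l : tpow t l \in unitmx.
Proof. by case: (mulmx1_unit (tpowV l)). Qed.

Lemma tpow_inv l : invmx (tpow t l) = tpow t (- l).
Proof. apply: invmx_uniq; [exact: tpow_unit | exact: tpowV]. Qed.

Lemma tpow_tpow l m : tpow (tpow t l) m = tpow t (m * l).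
Proof. by rewrite /tpow (addrC 1%:M (l *: _)) addrK scalerA. Qed.

Lemma tpow_cnj (G h : 'M[K]_n) l : G \in unitmx -> tpow (cnj G h) l = cnj G (tpow h l).
Proof.
move=> uG; rewrite /tpow /cnj mulmxDr mulmxDl mulmx1 mulmxV //.
by rewrite -scalemxAr -scalemxAl mulmxBr mulmxBl mulmx1 mulmxV.
Qed.

Lemma cnj1 (A : 'M[K]_n) : cnj 1%:M A = A.
Proof. by rewrite /cnj invmx1 mul1mx mulmx1. Qed.

Lemma cnj_one_outer (G : 'M[K]_n) l : G \in unitmx ->
  cnj G (1%:M + l *: D) = 1%:M + (l *: (G *m d)) *m (phi *m invmx G).
Proof.
move=> uG; rewrite /cnj mulmxDr mulmxDl mulmx1 mulmxV // -scalemxAr -scalemxAl.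
by rewrite /D !mulmxA -scalemxAl.
Qed.

Lemma Y1_cnj g l : Bn g -> Y1 (cnj g (tpow t l)).
Proof.
case=> xs [sz Hxs ->]; exists l, xs; split => //.
by rewrite /cnj inv_prodl // => a /Hxs /(X_unit HX).
Qed.

Lemma Y1_inv_form y : Y1 y -> exists g l, [/\ Bn g, g \in unitmx & y = cnj g (tpow t l)].
Proof.
case=> l [xs [sz Hxs ->]].
have Bg : Bn (prodl xs) by exists xs.
exists (prodl xs), l; split => //; first exact: Bw_unit Bg.
by rewrite /cnj inv_prodl // => a /Hxs /(X_unit HX).
Qed.

Definition Y2 (h : 'M[K]_n) := exists y1 y2, [/\ Y1 y1, Y1 y2 & h = cnj y1 y2].

Lemma Y1_1 : Y1 1%:M.
Proof. by rewrite -(cnj1 1%:M) -{2}tpow0; apply: Y1_cnj; exact: Bw1. Qed.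

Lemma Y1_Y2 y : Y1 y -> Y2 y.
Proof. by move=> Yy; exists 1%:M, y; split; rewrite ?cnj1 //; exact: Y1_1. Qed.

Lemma Y2_form h : Y2 h -> exists G l, G \in unitmx /\ h = cnj G (1%:M + l *: D).
Proof.
case=> y1 [y2 [/Y1_inv_form [g1 [l1 [B1 u1 ->]]] /Y1_inv_form [g2 [l2 [B2 u2 ->]]] ->]].
have uy1 : cnj g1 (tpow t l1) \in unitmx.
  by rewrite /cnj !unitmx_mul u1 tpow_unit unitmx_inv u1.
exists (cnj g1 (tpow t l1) *m g2), l2; split; first by rewrite unitmx_mul uy1.
by rewrite -tpowE; symmetry; apply: cnjM.
Qed.

Lemma Y2_trans : transvection_set Y2.
Proof.
move=> h /Y2_form [G [l [uG ->]]]; rewrite cnj_one_outer //.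
case: (eqVneq l 0) => [->|l0]; first by right; rewrite scale0r mul0mx addr0.
left; exists (l *: (G *m d)), (phi *m invmx G); split => //.
- by rewrite scaler_eq0 negb_or l0 unit_Gd.
- by rewrite unit_phiG // unitmx_inv.
- by rewrite -scalemxAr !mulmxA -(mulmxA phi) mulVmx // mulmx1 phid scaler0.
Qed.

Lemma Y2_closed : K_closed Y2.
Proof.
move=> h [y1 [y2 [Y1y1 Y1y2 ->]]] m.
have [g1 [l1 [B1 u1 E1]]] := Y1_inv_form Y1y1.
have [g2 [l2 [B2 u2 E2]]] := Y1_inv_form Y1y2.
have uy1 : y1 \in unitmx by rewrite E1 /cnj !unitmx_mul u1 tpow_unit unitmx_inv u1.
exists y1, (cnj g2 (tpow t (m * l2))); split => //; first exact: Y1_cnj.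
by rewrite tpow_cnj // E2 tpow_cnj // tpow_tpow.
Qed.

Lemma Y1_invmx y : Y1 y -> Y1 (invmx y).
Proof.
move=> /Y1_inv_form [g [l [Bg ug ->]]].
rewrite /cnj !invmxM ?unitmx_mul ?ug ?tpow_unit ?unitmx_inv // invmxK tpow_inv.
by rewrite mulmxA; apply: Y1_cnj.
Qed.

Lemma Y2_ell (hn : (3 <= n)%N) : ell_le Y1 Y2 (1 * n).
Proof.
exists 3%N; split; first by rewrite mul1n.
move=> h [y1 [y2 [Y1y1 Y1y2 ->]]]; exists [:: y1; y2; invmx y1]; split => //.
- by move=> a; rewrite !inE => /orP [/eqP ->|/orP [/eqP ->|/eqP ->]] //; exact: Y1_invmx.
- by rewrite /prodl /= mulmx1 /cnj mulmxA.
Qed.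


Lemma gamma_prod (r s : 'M[K]_n) : gamma_edge r s -> (s - 1%:M) *m (r - 1%:M) != 0.
Proof.
case=> [d1 [p1 [d2 [p2 [[n1 m1 _ E1] [[n2 m2 _ E2] ne]]]]]]; subst r s.
rewrite !(addrC 1%:M) !addrK outer_mul scaler_eq0 negb_or outer_neq0 // andbT.
by rewrite -mx11_eq0.
Qed.

Definition f (A : 'M[K]_n) := dot phi (A *m d).

Lemma fD A B : f (A + B) = f A + f B.
Proof. by rewrite /f mulmxDl dotDr. Qed.
Lemma fZ c A : f (c *: A) = c * f A.
Proof. by rewrite /f -scalemxAl dotZr. Qed.
Lemma f1 : f 1%:M = 0.
Proof. by rewrite /f mul1mx dotphid. Qed.

Lemma dot_split (r : 'rV[K]_n) (A : 'M[K]_n) (u : 'cV[K]_n) (v : 'rV[K]_n) (B : 'M[K]_n) (c : 'cV[K]_n) :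
  dot r (A *m (u *m v) *m B *m c) = dot r (A *m u) * dot v (B *m c).
Proof.
rewrite /dot; have -> : r *m (A *m (u *m v) *m B *m c) = (r *m (A *m u)) *m (v *m (B *m c)).
  by rewrite !mulmxA.
exact: mul11.
Qed.

Lemma fsplit A B : f (A *m D *m B) = f A * f B.
Proof. by rewrite /f dot_split. Qed.

Lemma f_outer (A : 'M[K]_n) (u : 'cV[K]_n) (v : 'rV[K]_n) (B : 'M[K]_n) :
  f (A *m (1%:M + u *m v) *m B) = f (A *m B) + dot phi (A *m u) * dot v (B *m d).
Proof. by rewrite mulmxDr mulmx1 mulmxDl fD /f dot_split. Qed.

Lemma f_tpow A l B : f (A *m tpow t l *m B) = f (A *m B) + l * f A * f B.
Proof.
rewrite tpowE mulmxDr mulmx1 mulmxDl fD -scalemxAr -scalemxAl fZ fsplit.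
by rewrite mulrA.
Qed.

Lemma cnjt G : G \in unitmx -> cnj G t = 1%:M + (G *m d) *m (phi *m invmx G).
Proof.
move=> uG; have -> : t = 1%:M + 1 *: D by rewrite scale1r.
by rewrite cnj_one_outer // scale1r.
Qed.

Lemma nondeg G : G \in unitmx ->
  [/\ G *m d != 0, phi *m invmx G != 0 & (phi *m invmx G) *m (G *m d) = 0].
Proof.
move=> uG; split; [exact: unit_Gd | by rewrite unit_phiG // unitmx_inv |].
by rewrite mulmxA -(mulmxA phi) mulVmx // mulmx1.
Qed.

Lemma Y2G l g : Bn g -> Y2 (cnj (tpow t l *m g) t).
Proof.
move=> Bg; exists (tpow t l), (cnj g t); split.
- by rewrite -(cnj1 (tpow t l)); apply: Y1_cnj; exact: Bw1.
- by rewrite -tpow1; apply: Y1_cnj.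
- by apply: cnjM; [exact: tpow_unit | exact: (Bw_unit HX Bg)].
Qed.

Hypothesis Hno : ~ has_oneway_edge Y2.

Lemma symG G1 G2 : G1 \in unitmx -> G2 \in unitmx -> Y2 (cnj G1 t) -> Y2 (cnj G2 t) ->
  (f (invmx G2 *m G1) == 0) = (f (invmx G1 *m G2) == 0).
Proof.
have key : forall Ga Gb, Ga \in unitmx -> Gb \in unitmx -> Y2 (cnj Ga t) -> Y2 (cnj Gb t) ->
    f (invmx Gb *m Ga) != 0 -> f (invmx Ga *m Gb) == 0 -> False.
  move=> Ga Gb ua ub Ya Yb ne eq; apply: Hno.
  have [na ma pa] := nondeg ua; have [nb mb pb] := nondeg ub.
  have nt : forall G, G \in unitmx -> cnj G t <> 1%:M.
    move=> G uG; have [nG mG _] := nondeg uG; rewrite cnjt // => E.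
    move: (outer_neq0 nG mG); rewrite -(addKr 1%:M ((G *m d) *m (phi *m invmx G))) E.
    by rewrite addNr eqxx.
  exists (cnj Ga t), (cnj Gb t); split; first by split => //; apply: nt.
  split.
    exists (Ga *m d), (phi *m invmx Ga), (Gb *m d), (phi *m invmx Gb).
    split; first by split => //; exact: cnjt.
    split; first by split => //; exact: cnjt.
    by rewrite mx11_eq0; move: ne; rewrite /f /dot !mulmxA.
  move/gamma_prod; rewrite !cnjt // !(addrC 1%:M) !addrK outer_mul /dot !mulmxA.
  move: eq; rewrite /f /dot !mulmxA => /eqP ->; by rewrite scale0r eqxx.
move=> u1 u2 Y1' Y2'.
case E1: (f (invmx G2 *m G1) == 0); case E2: (f (invmx G1 *m G2) == 0) => //.
- by exfalso; apply: (key G2 G1) => //; rewrite ?E1 ?E2.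
- by exfalso; apply: (key G1 G2) => //; rewrite ?E1 ?E2.
Qed.

Lemma Sfact g : Bn g -> (f (invmx g) == 0) = (f g == 0).
Proof.
move=> Bg; have ug := Bw_unit HX Bg.
have Y1' := Y2G 0 (Bw1 H1 (n ^ 2)); have Y2' := Y2G 0 Bg.
rewrite tpow0 mul1mx in Y2'; rewrite tpow0 mulmx1 in Y1'.
by have := symG (unitmx1 _ _) ug Y1' Y2'; rewrite mulmx1 invmx1 mul1mx.
Qed.

Lemma Tid a b : Bn a -> Bn b -> f a != 0 ->
  f (a *m b) * f (invmx b) * f (invmx a) + f (invmx b *m invmx a) * f a * f b = 0.
Proof.
move=> Ba Bb fa0.
have p0 : f (invmx a) != 0 by rewrite (Sfact Ba).
case: (eqVneq (f b) 0) => [fb0|fb0].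
  have -> : f (invmx b) = 0 by apply/eqP; rewrite (Sfact Bb) fb0.
  by rewrite fb0 !mulr0 mul0r addr0.
have q0 : f (invmx b) != 0 by rewrite (Sfact Bb).
set u := f (invmx b *m invmx a).
set l0 := - u / (f (invmx b) * f (invmx a)).
have ua := Bw_unit HX Ba; have ub := Bw_unit HX Bb.
have uG1 : tpow t l0 *m invmx a \in unitmx by rewrite unitmx_mul tpow_unit unitmx_inv.
have YG1 := Y2G l0 (Bw_inv HX Hsym Ba).
have YG2 := Y2G 0 Bb; rewrite tpow0 mul1mx in YG2.
have := symG uG1 ub YG1 YG2.
rewrite mulmxA f_tpow.
have -> : u + l0 * f (invmx b) * f (invmx a) = 0 by rewrite /l0; field; apply/andP.
rewrite eqxx invmxM ?tpow_unit ?unitmx_inv // invmxK tpow_inv f_tpow => /esym/eqP.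
move/eqP; rewrite !mulNr subr_eq0 => /eqP ->.
rewrite /l0; field; apply/andP; split => //.
Qed.

Lemma D0 : D != 0.
Proof. exact: outer_neq0. Qed.

Lemma outer_inv (e : 'cV[K]_n) (psi : 'rV[K]_n) : dot psi e = 0 ->
  let g := 1%:M + e *m psi in
  [/\ inSL g, g \in unitmx & invmx g = 1%:M + (- e) *m psi].
Proof.
move=> psie g.
have gSL : inSL g by rewrite /inSL /g det_1outer psie addr0.
have ug : g \in unitmx by rewrite unitmxE gSL unitr1.
split => //; apply: invmx_uniq => //.
rewrite /g mulmxDr mulmx1 mulmxDl mul1mx outer_mul dotNr psie oppr0 scale0r addr0 mulNmx.
by rewrite addrK.
Qed.

Lemma exists_a : exists a, Bn a /\ f a != 0.
Proof.
apply: NNPP => Hc.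
have HL : forall b, Bn b -> f (cnj b D) = 0.
  move=> b Bb; have fb : f b = 0.
    by apply: NNPP => h; apply: Hc; exists b; split => //; exact/eqP.
  by rewrite /cnj fsplit fb mul0r.
have [j pj] := exists_nz_row phi0.
have [i di] := exists_nz_col d0.
set e : 'cV[K]_n := delta_mx j 0.
set th : 'rV[K]_n := delta_mx 0 i.
have pe : dot phi e != 0 by rewrite dot_delta_r.
have thd : dot th d != 0 by rewrite dot_delta_l.
set psi := dot phi e *: th - dot th e *: phi.
have psie : dot psi e = 0 by rewrite dotDl dotNl !dotZl mulrC subrr.
have psid : dot psi d = dot phi e * dot th d.
  by rewrite dotDl dotNl !dotZl dotphid mulr0 subr0.
have [gSL ug ginv] := outer_inv psie.
have := transfer HX Hsym H1 D0 fD fZ HL gSL.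
rewrite /cnj ginv fsplit.
rewrite -[1%:M + e *m psi]mul1mx -[1%:M *m (1%:M + e *m psi)]mulmx1.
rewrite -[1%:M + (- e) *m psi]mul1mx -[1%:M *m (1%:M + (- e) *m psi)]mulmx1.
rewrite !f_outer !mulmx1 !mul1mx f1 !add0r psid dotNr => /eqP.
by rewrite mulNr mulrN oppr_eq0 !mulf_eq0 (negbTE pe) (negbTE thd).
Qed.

Lemma contra_main : (3 <= n)%N -> False.
Proof.
move=> hn; have [a [Ba fa0]] := exists_a.
have ua := Bw_unit HX Ba.
have p0 : f (invmx a) != 0 by rewrite (Sfact Ba).
set p := f (invmx a); set fa := f a.
pose L N := p * f (a *m N) + fa * f (N *m invmx a).
have LD : forall A B, L (A + B) = L A + L B.
  by move=> A B; rewrite /L mulmxDr mulmxDl !fD; ring.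
have LZ : forall c A, L (c *: A) = c * L A.
  by move=> c A; rewrite /L -scalemxAr -scalemxAl !fZ; ring.
have HL : forall b, Bn b -> L (cnj b D) = 0.
  move=> b Bb; rewrite /L /cnj.
  have -> : a *m (b *m D *m invmx b) = (a *m b) *m D *m invmx b by rewrite !mulmxA.
  have -> : b *m D *m invmx b *m invmx a = b *m D *m (invmx b *m invmx a).
    by rewrite !mulmxA.
  rewrite !fsplit; have E := Tid Ba Bb fa0; apply: (etrans _ E); rewrite /p /fa; ring.
have Lg := transfer HX Hsym H1 D0 LD LZ HL.
set al := phi *m a; set be := invmx a *m d.
have fa_al : fa = dot al d by rewrite /fa /f /al dotA.
have p_be : p = dot phi be by [].
have albe : dot al be = 0 by rewrite /al /be dotA mulmxA mulmxV // mul1mx dotphid.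
have [w [w0 pw aw]] := exists_perp phi al hn.
have [i wi] := exists_nz_col w0.
set th : 'rV[K]_n := delta_mx 0 i.
have thw : dot th w != 0 by rewrite dot_delta_l.
set e := be + w.
have pe : dot phi e = p by rewrite dotDr pw addr0.
have ale : dot al e = 0 by rewrite dotDr albe aw addr0.
have fa0' : dot al d != 0 by rewrite -fa_al.
set psi := (- dot th e / p) *: phi + ((1 - dot th d) / dot al d) *: al + th.
have psie : dot psi e = 0.
  by rewrite !dotDl !dotZl pe ale; field; apply/andP; split.
have psid : dot psi d = 1.
  by rewrite !dotDl !dotZl dotphid; field; apply/andP; split.
have psibe : dot psi be = - dot th w.
  by rewrite !dotDl !dotZl -p_be albe /e dotDr; field; apply/andP; split.
have [gSL ug ginv] := outer_inv psie.
have := Lg _ gSL; rewrite /L /cnj ginv.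
set g := 1%:M + e *m psi; set g' := 1%:M + (- e) *m psi.
have -> : a *m (g *m D *m g') = (a *m g) *m D *m g' by rewrite !mulmxA.
have -> : g *m D *m g' *m invmx a = g *m D *m (g' *m invmx a) by rewrite !mulmxA.
rewrite !fsplit.
have hf1 : f (a *m g) = fa.
  have := f_outer a e psi 1%:M; rewrite !mulmx1 => ->.
  by rewrite -dotA -/al ale mul0r addr0.
have hf2 : f g' = - p.
  have := f_outer 1%:M (- e) psi 1%:M; rewrite !mulmx1 !mul1mx f1 add0r => ->.
  by rewrite dotNr pe psid mulr1.
have hf3 : f g = p.
  have := f_outer 1%:M e psi 1%:M; rewrite !mulmx1 !mul1mx f1 add0r => ->.
  by rewrite pe psid mulr1.
have hf4 : f (g' *m invmx a) = p + p * dot th w.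
  have := f_outer 1%:M (- e) psi (invmx a); rewrite !mul1mx => ->.
  by rewrite -/p dotNr pe -/be psibe mulrNN.
rewrite hf1 hf2 hf3 hf4 => /eqP.
have -> : p * (fa * - p) + fa * (p * (p + p * dot th w)) = fa * (p * p) * dot th w by ring.
by rewrite !mulf_eq0 (negbTE fa0) (negbTE p0) (negbTE thw).
Qed.

End Main.

Theorem corollary4p7 :
  exists C : nat,
  forall (K : fieldType) (n : nat), (3 <= n)%N ->
  forall (X : 'M[K]_n -> Prop) (t : 'M[K]_n),
    generates_SL X -> symmetric_set X -> X 1%:M ->
    is_transvection t -> (forall lambda : K, X (tpow t lambda)) ->
    exists Y2 : 'M[K]_n -> Prop,
      [/\ transvection_set Y2, K_closed Y2,
          (forall g, Y1_set X t g -> Y2 g),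
          ell_le (Y1_set X t) Y2 (C * n)
        & has_oneway_edge Y2].
Proof.
exists 1%N => K n hn X t HX Hsym H1 [d [phi [d0 phi0 phid ->]]] _.
exists (Y2 X d phi); split.
- exact: Y2_trans.
- exact: Y2_closed.
- exact: Y1_Y2.
- exact: Y2_ell.
- apply: NNPP => Hno; exact: (contra_main HX Hsym H1 d0 phi0 phid Hno hn).
Qed.
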